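(* Let $H, W \ge 1$ be integers and $L=HW$. For each $s \in \{0,1,\dots,H+W-2\}$ let $i_{\min}(s)=\max(0,\,s-(W-1))$ and $i_{\max}(s)=\min(s,\,H-1)$. Let $\mathbf{d}^{(s)}$ be the ordered list of points $(i,\,s-i)$ and $\mathbf{a}^{(s)}$ the ordered list of points $(i,\,W-1-(s-i))$, in both cases for $i=i_{\min}(s),\dots,i_{\max}(s)$ in increasing order. Set $\operatorname{diag}(s)=\mathbf{d}^{(s)}$, $\operatorname{antidiag}(s)=\mathbf{a}^{(s)}$ for $s$ even and $\operatorname{diag}(s)=\operatorname{reverse}(\mathbf{d}^{(s)})$, $\operatorname{antidiag}(s)=\operatorname{reverse}(\mathbf{a}^{(s)})$ for $s$ odd. Let $\mathbf{p}_{\text{diag}}$ (resp. $\mathbf{p}_{\text{antidiag}}$) be the concatenation of $\operatorname{diag}(s)$ (resp. $\operatorname{antidiag}(s)$) over $s=0,1,\dots,H+W-2$. Then for each of the four point sequences $\mathbf{p}_{\text{diag}}$, $\mathbf{p}_{\text{antidiag}}$, $\operatorname{reverse}(\mathbf{p}_{\text{diag}})$, $\operatorname{reverse}(\mathbf{p}_{\text{antidiag}})$, any two consecutive points $\mathbf{p},\mathbf{q}$ satisfy $\|\mathbf{q}-\mathbf{p}\|_2 \le \sqrt{2}$.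
   Context: The grid is $\{0,\dots,H-1\}\times\{0,\dots,W-1\}$ with points $(i,j)$. $\operatorname{reverse}$ reverses a finite list; $\|\cdot\|_2$ is the Euclidean norm. These four sequences (flattened to raster indices $iW+j$) form the four rows of the TopoA-Scan forward index tensor. *)

(* Defs.v *)
From mathcomp Require Import all_boot all_order all_algebra.
Set Implicit Arguments. Unset Strict Implicit. Unset Printing Implicit Defensive.
Import Order.TTheory GRing.Theory Num.Theory.

(* Grid points (i, j) with 0 <= i < H, 0 <= j < W. *)
Definition point := (nat * nat)%type.

Definition imin (W s : nat) : nat := maxn 0 (s - (W - 1)).
Definition imax (H s : nat) : nat := minn s (H - 1).

Definition irange (H W s : nat) : seq nat :=
  iota (imin W s) ((imax H s).+1 - imin W s).

Definition dseq (H W s : nat) : seq point :=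
  [seq (i, s - i) | i <- irange H W s].
Definition aseq (H W s : nat) : seq point :=
  [seq (i, W - 1 - (s - i)) | i <- irange H W s].

Definition diag (H W s : nat) : seq point :=
  if odd s then rev (dseq H W s) else dseq H W s.
Definition antidiag (H W s : nat) : seq point :=
  if odd s then rev (aseq H W s) else aseq H W s.

Definition p_diag (H W : nat) : seq point :=
  flatten [seq diag H W s | s <- iota 0 (H + W - 1)].
Definition p_antidiag (H W : nat) : seq point :=
  flatten [seq antidiag H W s | s <- iota 0 (H + W - 1)].

Local Open Scope ring_scope.

Definition dist2 (R : rcfType) (p q : point) : R :=
  Num.sqrt ((q.1%:R - p.1%:R) ^+ 2 + (q.2%:R - p.2%:R) ^+ 2).

Definition consecutive_close (R : rcfType) (ps : seq point) : Prop :=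
  forall k : nat, (k.+1 < size ps)%N ->
    dist2 R (nth (0%N, 0%N) ps k) (nth (0%N, 0%N) ps k.+1) <= Num.sqrt 2.

(* Main.v *)
Require Import Defs.
From mathcomp Require Import all_boot all_order all_algebra.
From mathcomp Require Import zify ring lra.
Import Order.TTheory GRing.Theory Num.Theory.
Local Open Scope ring_scope.

Definition adj (p q : point) : bool :=
  [&& (p.1 - q.1 <= 1)%N, (q.1 - p.1 <= 1)%N, (p.2 - q.2 <= 1)%N & (q.2 - p.2 <= 1)%N].

Lemma adj_sym p q : adj p q = adj q p.
Proof. by rewrite /adj; case: (p.1 - q.1 <= 1)%N; case: (q.1 - p.1 <= 1)%N;
  case: (p.2 - q.2 <= 1)%N; case: (q.2 - p.2 <= 1)%N. Qed.

Lemma adj_refl p : adj p p.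
Proof. by rewrite /adj !subnn. Qed.

Lemma sq1 (R : rcfType) (a b : nat) : (a - b <= 1)%N -> (b - a <= 1)%N ->
  ((b%:R - a%:R : R) ^+ 2 <= 1)%R.
Proof.
move=> h1 h2.
have [->|[->|->]] : b = a \/ b = a.+1 \/ a = b.+1 by lia.
- by rewrite subrr expr0n.
- by rewrite -natr1 addrAC subrr add0r expr1n.
- by rewrite -natr1 opprD addrA subrr add0r sqrrN expr1n.
Qed.

Lemma adj_dist (R : rcfType) p q : adj p q -> dist2 R p q <= Num.sqrt 2.
Proof.
case/and4P=> h1 h2 h3 h4; rewrite /dist2 ler_sqrt ?ler0n //.
have := sq1 R _ _ h1 h2; have := sq1 R _ _ h3 h4.
move=> A B; apply: (le_trans (lerD B A)); by rewrite -[2%:R]/(1 + 1)%R.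
Qed.

Lemma close_of_sorted (R : rcfType) ps : sorted adj ps -> consecutive_close R ps.
Proof.
move/(sortedP (0%N, 0%N))=> h k hk; exact: adj_dist (h k hk).
Qed.

Lemma sorted_rev_adj ps : sorted adj ps -> sorted adj (rev ps).
Proof.
move=> h; rewrite rev_sorted; apply: sub_sorted h => x y; by rewrite adj_sym.
Qed.

Definition x0 : point := (0%N, 0%N).

Local Close Scope ring_scope.
Lemma path_gen (f : nat -> seq point) n :
  (forall s, (s < n)%N -> f s != [::]) ->
  (forall s, (s < n)%N -> sorted adj (f s)) ->
  (forall s, (s.+1 < n)%N -> adj (last x0 (f s)) (head x0 (f s.+1))) ->
  forall k m x, (m + k <= n)%N -> ((0 < k)%N -> adj x (head x0 (f m))) ->
  path adj x (flatten [seq f i | i <- iota m k]).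
Proof.
move=> hne hs ht; elim=> [|k IH] m x hmk hx //=.
have hm : (m < n)%N by lia.
rewrite cat_path; move: (hne m hm) (hs m hm) (hx isT) (ht m).
case: (f m) => [|y t] //= _ st hxy htm.
rewrite hxy st /=; apply: IH; first lia.
move=> kp; have := htm ltac:(lia); by [].
Qed.

Lemma flat_sorted (f : nat -> seq point) n :
  (forall s, (s < n)%N -> f s != [::]) ->
  (forall s, (s < n)%N -> sorted adj (f s)) ->
  (forall s, (s.+1 < n)%N -> adj (last x0 (f s)) (head x0 (f s.+1))) ->
  sorted adj (flatten [seq f s | s <- iota 0 n]).
Proof.
move=> hne hs ht.
case: n hne hs ht => [|n] hne hs ht //.
have := @path_gen f n.+1 hne hs ht n.+1 0 (head x0 (f 0)) (leqnn _).
rewrite /= (_ : 0 < n.+1)%N //; move: (hne 0%N isT).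
case: (f 0%N) => [|y t] //= _; rewrite adj_refl => /(_ (fun _ => isT)).
by [].
Qed.

Lemma iota_sorted (r : rel nat) a b :
  (forall i, a <= i -> i.+1 < a + b -> r i i.+1) -> sorted r (iota a b).
Proof.
elim: b a => [|b IH] a //= h.
case: b IH h => [|b] IH h //=.
rewrite h ?leqnn //=; last lia.
by have := IH a.+1 (fun i h1 h2 => h i ltac:(lia) ltac:(lia)).
Qed.

Lemma last_iota_map (g : nat -> point) a n :
  last x0 [seq g i | i <- iota a n.+1] = g (a + n).
Proof.
rewrite [iota _ _]/= map_cons /= last_map; congr g.
elim: n a => [|n IH] a /=; first by rewrite addn0.
by rewrite IH addSnnS.
Qed.

Lemma head_rev' (s : seq point) : head x0 (rev s) = last x0 s.
Proof. by case/lastP: s => [|s y] //; rewrite rev_rcons last_rcons. Qed.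

Lemma last_rev' (s : seq point) : last x0 (rev s) = head x0 s.
Proof. by case: s => [|y s] //; rewrite rev_cons last_rcons. Qed.

Lemma irangeE H W s : 1 <= H -> 1 <= W -> s < H + W - 1 ->
  imin W s <= imax H s /\
  irange H W s = iota (imin W s) (imax H s - imin W s).+1.
Proof.
move=> hH hW hs; rewrite /irange /imin /imax.
split; first lia. congr iota; lia.
Qed.

Definition block (H W : nat) (g : nat -> nat -> point) (s : nat) :=
  if odd s then rev [seq g s i | i <- irange H W s] else [seq g s i | i <- irange H W s].

Lemma block_props H W g s : 1 <= H -> 1 <= W -> s < H + W - 1 ->
  (forall i, imin W s <= i -> i < imax H s -> adj (g s i) (g s i.+1)) ->
  [/\ block H W g s != [::], sorted adj (block H W g s),
      head x0 (block H W g s) = if odd s then g s (imax H s) else g s (imin W s)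
    & last x0 (block H W g s) = if odd s then g s (imin W s) else g s (imax H s)].
Proof.
move=> hH hW hs hadj; rewrite /block; have [hle ->] := @irangeE H W s hH hW hs.
have hsort : sorted adj [seq g s i | i <- iota (imin W s) (imax H s - imin W s).+1].
  rewrite sorted_map; apply: iota_sorted => i h1 h2; apply: hadj; lia.
have hl := last_iota_map (g s) (imin W s) (imax H s - imin W s).
rewrite (_ : imin W s + (imax H s - imin W s) = imax H s) in hl; last lia.
case: (odd s).
- split => //; first by rewrite -size_eq0 size_rev size_map size_iota.
  + exact: sorted_rev_adj.
  + by rewrite head_rev'.
  + by rewrite last_rev'.
- by split.
Qed.

Lemma diag_block H W : diag H W = block H W (fun s i => (i, s - i)).
Proof. by []. Qed.
Lemma antidiag_block H W : antidiag H W = block H W (fun s i => (i, W - 1 - (s - i))).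
Proof. by []. Qed.

Lemma block_sorted H W g : 1 <= H -> 1 <= W ->
  (forall s i, s < H + W - 1 -> imin W s <= i -> i < imax H s -> adj (g s i) (g s i.+1)) ->
  (forall s, s.+1 < H + W - 1 ->
     adj (if odd s then g s (imin W s) else g s (imax H s))
         (if odd s.+1 then g s.+1 (imax H s.+1) else g s.+1 (imin W s.+1))) ->
  sorted adj (flatten [seq block H W g s | s <- iota 0 (H + W - 1)]).
Proof.
move=> hH hW hin htr; apply: flat_sorted.
- by move=> s hs; case: (@block_props H W g s hH hW hs (hin s^~ hs)).
- by move=> s hs; case: (@block_props H W g s hH hW hs (hin s^~ hs)).
- move=> s hs.
  have hs1 : s < H + W - 1 by lia.
  case: (@block_props H W g s hH hW hs1 (hin s^~ hs1)) => _ _ _ ->.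
  case: (@block_props H W g s.+1 hH hW hs (hin s.+1^~ hs)) => _ _ -> _.
  exact: htr.
Qed.

Theorem mainTheorem2 (R : rcfType) (H W : nat) :
  (1 <= H)%N -> (1 <= W)%N ->
  consecutive_close R (p_diag H W) /\
  consecutive_close R (p_antidiag H W) /\
  consecutive_close R (rev (p_diag H W)) /\
  consecutive_close R (rev (p_antidiag H W)).
Proof.
move=> hH hW.
have hd : sorted adj (p_diag H W).
  rewrite /p_diag diag_block; apply: block_sorted => //.
  - move=> s i hs h1 h2; rewrite /adj /=; move: h1 h2; rewrite /imin /imax; lia.
  - move=> s hs; rewrite /= /adj; case: (odd s) => /=; rewrite /imin /imax; lia.
have ha : sorted adj (p_antidiag H W).
  rewrite /p_antidiag antidiag_block; apply: block_sorted => //.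
  - move=> s i hs h1 h2; rewrite /adj /=; move: h1 h2; rewrite /imin /imax; lia.
  - move=> s hs; rewrite /= /adj; case: (odd s) => /=; rewrite /imin /imax; lia.
split; first exact: close_of_sorted.
split; first exact: close_of_sorted.
split; apply: close_of_sorted; exact: sorted_rev_adj.
Qed.
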